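(* Let $1\le k\le n-1$ and $I,J\in V_{k,n}$. For $i\in\mathbb{Z}$ let $I^{+i}$ denote the image of $I$ under $x\mapsto x+i$ with values taken modulo $n$ in $\{1,\dots,n\}$ (re-sorted to an increasing vector). Then: (1) if $I$ and $J$ are weakly separated, then they are noncrossing; (2) if $I^{+i}$ and $J^{+i}$ are noncrossing for every $i\in[n]$, then $I$ and $J$ are weakly separated. Consequently the weak separation complex $\Delta^{Sep}_{k,n}$ equals the intersection over $i\in[n]$ of the images of $\Delta^{NC}_{k,n}$ under the cyclic shift by $i$.
   Context: $V_{k,n}$ denotes the set of integer vectors $I=(i_1,\dots,i_k)$ with $1\le i_1<\dots<i_k\le n$, identified with $k$-subsets of $[n]$. Two arcs $(p<p')$, $(q<q')$ cross if $p<q<p'<q'$ or $q<p<q'<p'$. $I,J\in V_{k,n}$ are noncrossing if for all $1\le a<b\le k$ with $i_\ell=j_\ell$ for all $a<\ell<b$, the arcs $(i_a<i_b)$ and $(j_a<j_b)$ do not cross. $\Delta^{NC}_{k,n}$ is the flag simplicial complex on $V_{k,n}$ whose faces are the sets of pairwise noncrossing vectors. $I,J\in V_{k,n}$ are weakly separated if, placing $1,\dots,n$ as the vertices of a convex $n$-gon in cyclic order, the convex hulls of $I\setminus J$ and $J\setminus I$ are disjoint. $\Delta^{Sep}_{k,n}$ is the simplicial complex on $V_{k,n}$ whose faces are the sets of pairwise weakly separated vectors. *)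

(* Defs.v *)
From HB Require Import structures.
From mathcomp Require Import all_boot all_order all_algebra.
Set Implicit Arguments. Unset Strict Implicit. Unset Printing Implicit Defensive.
Import Order.TTheory GRing.Theory Num.Theory.

(* Conventions: [n] = {1,...,n} is modelled by 'I_n, the ordinal x : 'I_n
   standing for the integer x+1.  A k-subset I of [n] is a set
   I : {set 'I_n} with #|I| = k; its increasing vector is [vec I]. *)

Definition inV (k n : nat) (I : {set 'I_n}) : bool := #|I| == k.

Definition vec (n : nat) (I : {set 'I_n}) : seq nat :=
  sort leq [seq (val x).+1 | x in I].

Definition vnth (v : seq nat) (l : nat) : nat := nth 0%N v l.-1.

Definition cross (p p' q q' : nat) : bool :=
  ((p < q) && (q < p') && (p' < q'))%N || ((q < p) && (p < q') && (q' < p'))%N.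

Definition noncrossing (k n : nat) (I J : {set 'I_n}) : Prop :=
  forall a b : nat, (1 <= a)%N -> (a < b)%N -> (b <= k)%N ->
    (forall l : nat, (a < l)%N -> (l < b)%N -> vnth (vec I) l = vnth (vec J) l) ->
    ~~ cross (vnth (vec I) a) (vnth (vec I) b) (vnth (vec J) a) (vnth (vec J) b).

(* The vertex labelled j = x+1 is placed at the point (j, j^2) of the
   parabola; these n points are the vertices of a convex n-gon whose
   cyclic order is 1,2,...,n. *)
Definition px (n : nat) (x : 'I_n) : rat := ((val x).+1)%:R.
Definition py (n : nat) (x : 'I_n) : rat := (((val x).+1) ^ 2)%:R.

Definition in_hull (n : nat) (S : {set 'I_n}) (u v : rat) : Prop :=
  exists lam : 'I_n -> rat,
    [/\ forall x, (0 <= lam x)%R,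
        forall x, x \notin S -> lam x = 0,
        \sum_x lam x = 1,
        u = \sum_x lam x * px x &
        v = \sum_x lam x * py x]%R.

Definition weakly_separated (n : nat) (I J : {set 'I_n}) : Prop :=
  forall u v : rat, ~ (in_hull (I :\: J) u v /\ in_hull (J :\: I) u v).

Lemma ord_pos (n : nat) (x : 'I_n) : (0 < n)%N.
Proof. exact: leq_ltn_trans (leq0n x) (ltn_ord x). Qed.

Definition shift (n i : nat) (x : 'I_n) : 'I_n :=
  Ordinal (ltn_pmod (val x + i) (ord_pos x)).

Definition shiftset (n i : nat) (I : {set 'I_n}) : {set 'I_n} :=
  [set shift i x | x in I].

Definition NC_face (k n : nat) (F : {set {set 'I_n}}) : Prop :=
  (forall I, I \in F -> inV k I) /\
  (forall I J, I \in F -> J \in F -> noncrossing k I J).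

Definition Sep_face (k n : nat) (F : {set {set 'I_n}}) : Prop :=
  (forall I, I \in F -> inV k I) /\
  (forall I J, I \in F -> J \in F -> weakly_separated I J).

Definition shifted_NC_face (k n i : nat) (F : {set {set 'I_n}}) : Prop :=
  exists G : {set {set 'I_n}}, NC_face k G /\ F = [set shiftset i I | I in G].

(* Main.v *)
Require Import Defs.
From HB Require Import structures.
From mathcomp Require Import all_boot all_order all_algebra.
From mathcomp Require Import zify ring lra.
Set Implicit Arguments. Unset Strict Implicit. Unset Printing Implicit Defensive.

Section Cnt.
Variable n : nat.
Implicit Types I J : {set 'I_n}.

Definition cnt I (x : nat) : nat := #|[set y in I | (val y < x)%N]|.

Lemma cnt_mono I x x' : (x <= x')%N -> (cnt I x <= cnt I x')%N.
Proof.
move=> h; apply: subset_leq_card; apply/subsetP => y; rewrite !inE => /andP[-> hy].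
exact: leq_trans hy h.
Qed.

Lemma cnt0 I : cnt I 0 = 0.
Proof. rewrite /cnt; apply: eq_card0 => y; by rewrite !inE ltn0 andbF. Qed.

Lemma cnt_big I x : (n <= x)%N -> cnt I x = #|I|.
Proof.
move=> h; rewrite /cnt; apply: eq_card => y; rewrite !inE.
by rewrite (leq_trans (ltn_ord y) h) andbT.
Qed.

Lemma cntS I (y : 'I_n) : cnt I (val y).+1 = cnt I (val y) + (y \in I).
Proof.
rewrite /cnt.
have -> : [set z in I | (val z < (val y).+1)%N] =
   [set z in I | (val z < val y)%N] :|: (if y \in I then [set y] else set0).
  apply/setP => z; rewrite !inE ltnS leq_eqVlt (inj_eq val_inj).
  case: (eqVneq z y) => [->|hz] /=.
  - by case: (y \in I); rewrite ?inE ?eqxx ?ltnn.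
  - by case: (y \in I); rewrite ?inE ?(negbTE hz) ?orbF.
case: (boolP (y \in I)) => hy.
- by rewrite setUC cardsU1 !inE ltnn andbF /= add1n addn1.
- by rewrite setU0 addn0.
Qed.

Lemma cnt_step I x : (cnt I x <= cnt I x.+1 <= (cnt I x).+1)%N.
Proof.
case: (ltnP x n) => h.
- have := cntS I (Ordinal h) => /= ->; case: (_ \in _); lia.
- rewrite !cnt_big //; last exact: leqW. by rewrite leqnSn leqnn.
Qed.

Lemma cnt_le_card I x : (cnt I x <= #|I|)%N.
Proof. by apply: subset_leq_card; apply/subsetP => y; rewrite inE => /andP[]. Qed.

Lemma gainP I J x y : (x <= y)%N ->
  (cnt I x + cnt J y < cnt I y + cnt J x)%N ->
  exists z : 'I_n, [/\ (x <= val z < y)%N, z \in I & z \notin J].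
Proof.
elim: y => [|y IH] hxy hc.
  by move: hxy hc; rewrite leqn0 => /eqP ->; lia.
case: (ltnP x y.+1) => hx; last first.
  have ex : x = y.+1 by apply/eqP; rewrite eqn_leq hxy hx.
  subst x; lia.
case: (ltnP y n) => hy; last first.
  rewrite !(cnt_big _ (leqW hy)) in hc; rewrite -!(cnt_big _ hy) in hc.
  have [z [h1 h2 h3]] := IH hx hc; exists z; split => //; lia.
have eI := cntS I (Ordinal hy); have eJ := cntS J (Ordinal hy); simpl in eI, eJ.
case hI: (Ordinal hy \in I); case hJ: (Ordinal hy \in J); rewrite hI hJ /= in eI eJ.
- have [z [h1 h2 h3]] := IH hx ltac:(lia); exists z; split => //; lia.
- exists (Ordinal hy); rewrite hI hJ; split => //=; lia.
- have [z [h1 h2 h3]] := IH hx ltac:(lia); exists z; split => //; lia.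
- have [z [h1 h2 h3]] := IH hx ltac:(lia); exists z; split => //; lia.
Qed.

Lemma cnt_eq_between I J x y : (x <= y)%N ->
  (forall z : 'I_n, (x <= val z < y)%N -> (z \in I) = (z \in J)) ->
  cnt I x + cnt J y = cnt I y + cnt J x.
Proof.
move=> hxy hz; apply/eqP; rewrite eqn_leq; apply/andP; split.
- rewrite leqNgt; apply/negP => h.
  have [z [h1 h2 h3]] : exists z : 'I_n, [/\ (x <= val z < y)%N, z \in J & z \notin I].
    apply: gainP => //; lia.
  by move: h3; rewrite (hz z h1) h2.
- rewrite leqNgt; apply/negP => h.
  have [z [h1 h2 h3]] := gainP hxy h.
  by move: h3; rewrite -(hz z h1) h2.
Qed.

Lemma rank_exists I a : (a < #|I|)%N -> exists2 p : 'I_n, p \in I & cnt I (val p) = a.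
Proof.
move=> ha.
have ex : exists m, (a < cnt I m)%N by exists n; rewrite cnt_big.
case: (ex_minnP ex) => m hm hmin.
case: m hm hmin => [|m] hm hmin; first by rewrite cnt0 in hm.
have hle : (cnt I m <= a)%N by rewrite leqNgt; apply/negP => /hmin; lia.
case: (ltnP m n) => hmn; last by rewrite !cnt_big // in hm hle; lia.
have := cntS I (Ordinal hmn) => /= e.
case hI: (Ordinal hmn \in I); rewrite hI in e.
- exists (Ordinal hmn) => //=; lia.
- lia.
Qed.

Lemma cnt_lt_inj I (p q : 'I_n) : p \in I -> (cnt I (val p) < cnt I (val q))%N -> (val p < val q)%N.
Proof.
move=> hp h; rewrite ltnNge; apply/negP => hqp.
have := cnt_mono I hqp; lia.
Qed.

Lemma cnt_in_lt I (p : 'I_n) : p \in I -> (cnt I (val p) < #|I|)%N.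
Proof. move=> hp; have := cntS I p; rewrite hp => e; have := cnt_le_card I (val p).+1; lia. Qed.

End Cnt.
Lemma nth_count_sorted (s : seq nat) x : sorted ltn s -> x \in s ->
  nth 0 s (count (fun m => (m < x)%N) s) = x.
Proof.
elim: s => [|h t IH] //= hs; rewrite inE => /orP[/eqP ->|hx].
- rewrite ltnn add0n.
  have -> : count (fun m => (m < h)%N) t = 0.
    apply/eqP; rewrite -leqn0 leqNgt -has_count; apply/hasP => [[m hm]].
    have := order_path_min ltn_trans hs => /allP /(_ m hm); lia.
  done.
- have hhx : (h < x)%N.
    by have := order_path_min ltn_trans hs => /allP /(_ x hx).
  rewrite hhx add1n /=; apply: IH => //; exact: path_sorted hs.
Qed.

Lemma vec_sorted n (I : {set 'I_n}) : sorted ltn (vec I).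
Proof.
rewrite ltn_sorted_uniq_leq sort_uniq sort_sorted ?andbT; last exact: leq_total.
rewrite map_inj_uniq ?enum_uniq // => x y /eqP; rewrite eqSS => /eqP; exact: val_inj.
Qed.

Lemma mem_vec n (I : {set 'I_n}) (p : 'I_n) : p \in I -> (val p).+1 \in vec I.
Proof. by move=> hp; rewrite mem_sort; apply: (map_f (fun x : 'I_n => (val x).+1)); rewrite mem_enum. Qed.

Lemma cnt_count n (I : {set 'I_n}) (p : nat) :
  count (fun m => (m < p.+1)%N) (vec I) = cnt I p.
Proof.
rewrite /vec /cnt count_sort count_map cardE /enum_mem size_filter count_filter.
by apply: eq_count => y /=; rewrite !inE ltnS andbC.
Qed.

Lemma vnth_rank n (I : {set 'I_n}) (p : 'I_n) : p \in I ->
  vnth (vec I) (cnt I (val p)).+1 = (val p).+1.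
Proof.
move=> hp; rewrite /vnth /= -cnt_count.
exact: nth_count_sorted (vec_sorted I) (mem_vec hp).
Qed.

Lemma cntS_in n (I : {set 'I_n}) (y : 'I_n) : y \in I -> cnt I (val y).+1 = (cnt I (val y)).+1.
Proof. by move=> h; rewrite cntS h addn1. Qed.
Lemma cntS_out n (I : {set 'I_n}) (y : 'I_n) : y \notin I -> cnt I (val y).+1 = cnt I (val y).
Proof. by move=> h; rewrite cntS (negbTE h) addn0. Qed.

Definition ileave n (S T : {set 'I_n}) : Prop :=
  exists a b c d : 'I_n, [/\ a \in S, b \in T, c \in S, d \in T &
     [/\ (val a < val b)%N, (val b < val c)%N & (val c < val d)%N]].

Lemma vnth_of n (I : {set 'I_n}) a : (1 <= a <= #|I|)%N ->
  exists2 p : 'I_n, p \in I & cnt I (val p) = a.-1 /\ vnth (vec I) a = (val p).+1.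
Proof.
move=> ha; have [p hp hc] := rank_exists (a := a.-1) (I := I) ltac:(lia).
exists p => //; split => //; rewrite -(vnth_rank hp) hc; congr vnth; lia.
Qed.

Lemma cross_ileave k n (I J : {set 'I_n}) a b :
  #|I| = k -> #|J| = k -> (1 <= a)%N -> (a < b)%N -> (b <= k)%N ->
  (forall l : nat, (a < l)%N -> (l < b)%N -> vnth (vec I) l = vnth (vec J) l) ->
  (vnth (vec I) a < vnth (vec J) a)%N -> (vnth (vec J) a < vnth (vec I) b)%N ->
  (vnth (vec I) b < vnth (vec J) b)%N ->
  ileave (I :\: J) (J :\: I).
Proof.
move=> hI hJ ha hab hb hmid c1 c2 c3.
have [u hu [cu eu]] := vnth_of (I := I) (a := a) ltac:(lia).
have [s hs [cs es]] := vnth_of (I := J) (a := a) ltac:(lia).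
have [t ht [ct et]] := vnth_of (I := I) (a := b) ltac:(lia).
have [w hw [cw ew]] := vnth_of (I := J) (a := b) ltac:(lia).
rewrite eu es et ew in c1 c2 c3.
have cJt : cnt J (val t) = b.-1.
  apply/eqP; rewrite eqn_leq; apply/andP; split.
    by rewrite -cw; apply: cnt_mono; lia.
  case: (ltnP a b.-1) => hl.
  - have [m1 hm1 [cm1 em1]] := vnth_of (I := I) (a := b.-1) ltac:(lia).
    have [m2 hm2 [cm2 em2]] := vnth_of (I := J) (a := b.-1) ltac:(lia).
    have e := hmid b.-1 hl ltac:(lia); rewrite em1 em2 in e.
    have em : m1 = m2 by apply: val_inj; case: e.
    subst m2.
    have hmt : (val m1 < val t)%N by apply: (cnt_lt_inj hm1); lia.
    have e2 := cntS_in hm2.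
    have := cnt_mono J hmt; lia.
  - have e2 := cntS_in hs.
    have hst : (val s < val t)%N by lia.
    have := cnt_mono J hst; lia.
have cJu : (cnt J (val u).+1 <= a.-1)%N by rewrite -cs; apply: cnt_mono; lia.
have cIu := cntS_in hu.
have cIt := cntS_in ht.
have cIw : (cnt I (val t).+1 <= cnt I (val w))%N by apply: cnt_mono; lia.
have [z1 [z1b z1I z1J]] := gainP (I := I) (J := J) (x := 0) (y := (val u).+1) isT
  ltac:(rewrite !cnt0; lia).
have [z2 [z2b z2I z2J]] := gainP (I := J) (J := I) (x := (val u).+1) (y := val t)
  ltac:(lia) ltac:(lia).
have [z3 [z3b z3I z3J]] := gainP (I := I) (J := J) (x := val t) (y := val w)
  ltac:(lia) ltac:(lia).
have [z4 [z4b z4I z4J]] := gainP (I := J) (J := I) (x := val w) (y := n)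
  (ltnW (ltn_ord w)) ltac:(rewrite !(@cnt_big _ _ n) //; lia).
exists z1, z2, z3, z4; rewrite !inE z1I z1J z2I z2J z3I z3J z4I z4J; split => //.
case/andP: z1b => _ h1; rewrite ltnS in h1; case/andP: z2b => h2 h3; case/andP: z3b => h4 h5; case/andP: z4b => h6 _.
split; [exact: leq_ltn_trans h1 h2 | exact: leq_trans h3 h4 | exact: leq_trans h5 h6].
Qed.

Module Geo.
Import Order.TTheory GRing.Theory Num.Theory.
Local Open Scope ring_scope.

Lemma chord_cross (A B C D : rat) : A < B -> B < C -> C < D ->
  exists al be al' be' : rat, [/\ 0 <= al, 0 <= be, 0 <= al', 0 <= be' &
   [/\ al + be = 1, al' + be' = 1, al * A + be * C = al' * B + be' * D &
       al * A ^+ 2 + be * C ^+ 2 = al' * B ^+ 2 + be' * D ^+ 2]].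
Proof.
move=> hab hbc hcd.
have hden : 0 < B + D - A - C by lra.
have hca : 0 < C - A by lra.
have hdb : 0 < D - B by lra.
exists ((C - B) * (D - C) / ((C - A) * (B + D - A - C))),
       ((B - A) * (D - A) / ((C - A) * (B + D - A - C))),
       ((D - A) * (D - C) / ((D - B) * (B + D - A - C))),
       ((B - A) * (C - B) / ((D - B) * (B + D - A - C))).
have n1 : (C - A) * (B + D - A - C) != 0 by rewrite mulf_neq0 // gt_eqF.
have n2 : (D - B) * (B + D - A - C) != 0 by rewrite mulf_neq0 // gt_eqF.
have p1 : 0 < (C - A) * (B + D - A - C) by rewrite mulr_gt0.
have p2 : 0 < (D - B) * (B + D - A - C) by rewrite mulr_gt0.
split; try (apply: divr_ge0; [apply: mulr_ge0; lra | exact: ltW]).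
have hca0 : C - A != 0 by rewrite gt_eqF.
have hdb0 : D - B != 0 by rewrite gt_eqF.
have hd0 : B + D - A - C != 0 by rewrite gt_eqF.
split.
all: field; by rewrite ?hca0 ?hdb0 ?hd0.
Qed.

Lemma sum_pick n (a : 'I_n) (g : 'I_n -> rat) : \sum_x ((x == a)%:R * g x) = g a.
Proof.
rewrite (bigD1 a) //= eqxx mul1r big1 ?addr0 // => x /negbTE ->; by rewrite mul0r.
Qed.

Lemma sum2 n (a c : 'I_n) (al be : rat) (f : 'I_n -> rat) :
  \sum_x ((x == a)%:R * al + (x == c)%:R * be) * f x = al * f a + be * f c.
Proof.
rewrite (eq_bigr (fun x => (x == a)%:R * (al * f x) + (x == c)%:R * (be * f x))).
  by rewrite big_split /= !sum_pick.
by move=> x _; ring.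
Qed.

Lemma pyE n (x : 'I_n) : py x = px x ^+ 2.
Proof. by rewrite /py /px natrX. Qed.

Lemma hull2 n (S : {set 'I_n}) (a c : 'I_n) (al be : rat) :
  a \in S -> c \in S -> 0 <= al -> 0 <= be -> al + be = 1 ->
  in_hull S (al * px a + be * px c) (al * px a ^+ 2 + be * px c ^+ 2).
Proof.
move=> ha hc hal hbe hs.
exists (fun x => (x == a)%:R * al + (x == c)%:R * be); split.
- by move=> x; apply: addr_ge0; apply: mulr_ge0.
- move=> x hx; have -> : (x == a) = false by apply/eqP => e; rewrite e ha in hx.
  have -> : (x == c) = false by apply/eqP => e; rewrite e hc in hx.
  by rewrite !mul0r addr0.
- transitivity (\sum_x ((x == a)%:R * al + (x == c)%:R * be) * 1).
    by apply: eq_bigr => x _; rewrite mulr1.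
  by rewrite sum2 !mulr1.
- by rewrite sum2.
- by rewrite (eq_bigr (fun x => ((x == a)%:R * al + (x == c)%:R * be) * px x ^+ 2))
     ?sum2 // => x _; rewrite pyE.
Qed.

Lemma ileave_hull n (S T : {set 'I_n}) : ileave S T ->
  exists u v, in_hull S u v /\ in_hull T u v.
Proof.
move=> [a [b [c [d [ha hb hc hd [h1 h2 h3]]]]]].
have lt (x y : 'I_n) : (val x < val y)%N -> px x < px y :> rat by move=> h; rewrite /px ltr_nat ltnS.
have [al [be [al' [be' [p1 p2 p3 p4 [s1 s2 e1 e2]]]]]] :=
  chord_cross (lt _ _ h1) (lt _ _ h2) (lt _ _ h3).
exists (al * px a + be * px c), (al * px a ^+ 2 + be * px c ^+ 2); split.
- exact: hull2.
- rewrite e1 e2; exact: hull2.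
Qed.

Lemma nat_lt (m k : nat) : (m < k)%N -> m%:R + 1 <= k%:R :> rat.
Proof. by rewrite natr1 ler_nat. Qed.

Lemma hull_L n (S : {set 'I_n}) (P Q u v : rat) : in_hull S u v ->
  exists lam : 'I_n -> rat, [/\ forall x, 0 <= lam x, forall x, x \notin S -> lam x = 0,
    \sum_x lam x = 1 &
    v - (P + Q) * u + P * Q = \sum_x lam x * ((px x - P) * (px x - Q))].
Proof.
move=> [lam [h0 hS hs hu hv]]; exists lam; split => //.
rewrite (eq_bigr (fun x => lam x * py x - ((P + Q) * (lam x * px x) - P * Q * lam x))).
  by rewrite sumrB sumrB -!mulr_sumr hs hu hv; ring.
by move=> x _; rewrite pyE; ring.
Qed.

Lemma sep_hull n (S T : {set 'I_n}) (p q : nat) : (p <= q)%N ->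
  (forall x : 'I_n, x \in S -> (p <= val x <= q)%N) ->
  (forall x : 'I_n, x \in T -> (val x < p)%N \/ (q < val x)%N) ->
  forall u v, in_hull S u v -> in_hull T u v -> False.
Proof.
move=> hpq hS hT u v h1 h2.
set P : rat := (p.+1)%:R; set Q : rat := (q.+1)%:R.
have [l1 [l10 l1S l1s e1]] := hull_L P Q h1.
have [l2 [l20 l2S l2s e2]] := hull_L P Q h2.
have le0 : v - (P + Q) * u + P * Q <= 0.
  rewrite e1; apply: sumr_le0 => x _.
  case: (boolP (x \in S)) => hx; last by rewrite l1S // mul0r.
  apply: mulr_ge0_le0 => //; have /andP[a b] := hS x hx.
  apply: mulr_ge0_le0; rewrite /px /P /Q.
    by rewrite subr_ge0 ler_nat ltnS.
  by rewrite subr_le0 ler_nat ltnS.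
have ge1 : 1 <= v - (P + Q) * u + P * Q.
  rewrite e2 -l2s; apply: ler_sum => x _.
  case: (boolP (x \in T)) => hx; last by rewrite l2S // mul0r.
  rewrite -{1}[l2 x]mulr1; apply: ler_wpM2l => //.
  have hpq' : P <= Q by rewrite ler_nat ltnS.
  case: (hT x hx) => hh.
  - have := nat_lt (ltnSn _); have := nat_lt (m := (val x).+1) (k := p.+1) ltac:(by rewrite ltnS).
    rewrite /px -/P => hh1 _; nra.
  - have hh1 := nat_lt (m := (q.+1)) (k := (val x).+1) ltac:(by rewrite ltnS).
    rewrite /px -/Q in hh1 *; nra.
lra.
Qed.

Lemma hull_nonempty n (S : {set 'I_n}) u v : in_hull S u v -> exists x, x \in S.
Proof.
move=> [lam [_ hS hs _ _]]; case: (set_0Vmem S) => [e|[x hx]]; last by exists x.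
have : \sum_x lam x = 0.
  by apply: big1 => x _; apply: hS; rewrite e inE.
by rewrite hs => /eqP; rewrite oner_eq0.
Qed.

Lemma set_min n (S : {set 'I_n}) : (exists x, x \in S) ->
  exists2 p : 'I_n, p \in S & forall x, x \in S -> (val p <= val x)%N.
Proof.
move=> hex.
have ex : exists m, [exists x in S, val x == m] by case: hex => x hx; exists (val x); apply/existsP; exists x; rewrite hx eqxx.
case: (ex_minnP ex) => m /existsP [p /andP [hp /eqP hpm]] hmin.
exists p => // x hx; rewrite hpm; apply: hmin; apply/existsP; exists x; by rewrite hx eqxx.
Qed.

Lemma set_max n (S : {set 'I_n}) : (exists x, x \in S) ->
  exists2 p : 'I_n, p \in S & forall x, x \in S -> (val x <= val p)%N.
Proof.
move=> hex.
have ex : exists m, [exists x in S, val x == m] by case: hex => x hx; exists (val x); apply/existsP; exists x; rewrite hx eqxx.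
have bnd : forall m, [exists x in S, val x == m] -> (m <= n)%N.
  move=> m /existsP [x /andP [_ /eqP <-]]; exact: ltnW (ltn_ord x).
case: (ex_maxnP ex bnd) => m /existsP [p /andP [hp /eqP hpm]] hmax.
exists p => // x hx; rewrite hpm; apply: hmax; apply/existsP; exists x; by rewrite hx eqxx.
Qed.

Lemma hull_between n (S T : {set 'I_n}) u v :
  (forall x, x \in S -> x \notin T) -> in_hull S u v -> in_hull T u v ->
  exists p q y : 'I_n, [/\ p \in S, q \in S, y \in T, (val p < val y)%N & (val y < val q)%N].
Proof.
move=> hd h1 h2.
have [p hp hpm] := set_min (hull_nonempty h1).
have [q hq hqm] := set_max (hull_nonempty h1).
case: (boolP [exists y in T, (val p < val y < val q)%N]).
  move=> /existsP [y /and3P [hy a b]]; by exists p, q, y.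
move=> hn; exfalso; apply: (sep_hull (p := val p) (q := val q) _ _ _ h1 h2).
- exact: hpm.
- by move=> x hx; rewrite hpm // hqm.
- move=> y hy.
  have hy1 : y != p by apply/eqP => e; move: (hd _ hp); rewrite -e hy.
  have hy2 : y != q by apply/eqP => e; move: (hd _ hq); rewrite -e hy.
  case: (ltnP (val y) (val p)) => a; first by left.
  case: (ltnP (val q) (val y)) => b; first by right.
  exfalso; move/negP: hn; apply; apply/existsP; exists y; rewrite hy /=.
  rewrite ltn_neqAle a ltn_neqAle b andbT /= !(inj_eq val_inj) eq_sym hy1 /=.
  by rewrite hy2.
Qed.

Lemma hull_ileave n (S T : {set 'I_n}) u v :
  (forall x, x \in S -> x \notin T) -> in_hull S u v -> in_hull T u v ->
  ileave S T \/ ileave T S.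
Proof.
move=> hd h1 h2.
have hd' : forall x, x \in T -> x \notin S by move=> x hx; apply/negP => /hd; rewrite hx.
have [p [q [y [hp hq hy a b]]]] := hull_between hd h1 h2.
have [p' [q' [x [hp' hq' hx c d]]]] := hull_between hd' h2 h1.
case: (ltngtP (val x) (val y)) => e.
- right; exists p', x, y, q; split => //; split => //; lia.
- left; exists p, y, x, q'; split => //; split => //; lia.
- have e' : x = y by apply: val_inj.
  by move: (hd _ hx); rewrite e' hy.
Qed.

End Geo.
Import Geo.

Lemma ws_no_ileave n (I J : {set 'I_n}) : weakly_separated I J ->
  ~ ileave (I :\: J) (J :\: I) /\ ~ ileave (J :\: I) (I :\: J).
Proof.
move=> hw; split => /ileave_hull [u [v [h1 h2]]]; apply: (hw u v); by split.
Qed.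

Lemma part1 k n (I J : {set 'I_n}) : inV k I -> inV k J ->
  weakly_separated I J -> noncrossing k I J.
Proof.
move=> /eqP hI /eqP hJ /ws_no_ileave [n1 n2] a b ha hab hb hmid; apply/negP.
rewrite /cross => /orP [/andP [/andP [c1 c2] c3]| /andP [/andP [c1 c2] c3]].
- by apply: n1; apply: (cross_ileave hI hJ ha hab hb hmid).
- apply: n2; apply: (cross_ileave hJ hI ha hab hb) => //.
  by move=> l h1 h2; rewrite hmid.
Qed.

Section Shift.
Variable n : nat.
Implicit Types I J S T : {set 'I_n}.

Lemma val_shift i (x : 'I_n) : val (shift i x) = (val x + i) %% n.
Proof. by []. Qed.

Lemma shift_eq i j (x : 'I_n) : i %% n = j %% n -> shift i x = shift j x.
Proof. by move=> e; apply: val_inj; rewrite !val_shift -modnDmr e modnDmr. Qed.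

Lemma shift_comp i j (x : 'I_n) : shift i (shift j x) = shift (j + i) x.
Proof. by apply: val_inj; rewrite !val_shift modnDml addnA. Qed.

Lemma shift_id m (x : 'I_n) : m %% n = 0 -> shift m x = x.
Proof.
move=> e; apply: val_inj; rewrite val_shift -modnDmr e addn0 modn_small //; exact: ltn_ord.
Qed.

Lemma shift_inj i : injective (@shift n i).
Proof.
move=> x y e; have : (val x + i) %% n = (val y + i) %% n by rewrite -!val_shift e.
move/eqP; rewrite eqn_modDr !modn_small ?ltn_ord // => /eqP; exact: val_inj.
Qed.

Lemma mem_shift i I (x : 'I_n) : (shift i x \in shiftset i I) = (x \in I).
Proof. by rewrite mem_imset //; exact: shift_inj. Qed.

Lemma card_shift i I : #|shiftset i I| = #|I|.
Proof. by rewrite card_imset //; exact: shift_inj. Qed.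

Lemma shiftset_comp i j I : shiftset i (shiftset j I) = shiftset (j + i) I.
Proof.
rewrite /shiftset -imset_comp; apply: eq_imset => x /=; exact: shift_comp.
Qed.

Lemma shiftset_eq i j I : i %% n = j %% n -> shiftset i I = shiftset j I.
Proof. by move=> e; apply: eq_imset => x; apply: shift_eq. Qed.

Lemma shiftset_id m I : m %% n = 0 -> shiftset m I = I.
Proof.
move=> e; rewrite /shiftset (eq_imset (g := id)) ?imset_id // => x; exact: shift_id.
Qed.

Lemma mem_shiftD i I J (x : 'I_n) :
  (shift i x \in shiftset i I :\: shiftset i J) = (x \in I :\: J).
Proof. by rewrite !inE !mem_shift. Qed.

Lemma val_shift_th j (y : 'I_n) :
  val (shift j y) = if (val y + j %% n < n)%N then val y + j %% n else val y + j %% n - n.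
Proof.
have hn : (0 < n)%N := ord_pos y.
have hm : (j %% n < n)%N := ltn_pmod j hn.
have hy : (val y < n)%N := ltn_ord y.
rewrite val_shift -modnDmr.
case: ltnP => h.
- by rewrite modn_small.
- have e : val y + j %% n = (val y + j %% n - n) + n by lia.
  rewrite e modnDr modn_small; lia.
Qed.

Lemma val_shift_r r (y : 'I_n) : (r < n)%N ->
  val (shift (n - r) y) = if (r <= val y)%N then val y - r else val y + (n - r).
Proof.
move=> hr; rewrite val_shift_th.
have hy : (val y < n)%N := ltn_ord y.
case: (posnP r) => hr0.
- subst r; by rewrite subn0 modnn addn0 hy leq0n subn0.
- rewrite (modn_small (m := n - r)); last lia.
  case: (leqP r (val y)) => h2; case: ifP => h3; lia.
Qed.

Lemma cnt_shift_set i I x :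
  cnt (shiftset i I) x = #|[set y in I | (val (shift i y) < x)%N]|.
Proof.
rewrite /cnt -[RHS](card_imset _ (@shift_inj i)); apply: eq_card => z.
rewrite !inE; apply/andP/imsetP.
- move=> [/imsetP [y hy ->] hz]; exists y => //; by rewrite inE hy.
- move=> [y]; rewrite inE => /andP [hy hz] ->; by rewrite mem_shift hy.
Qed.

Lemma cnt_shiftA r I x : (r < n)%N -> (x <= n - r)%N ->
  cnt (shiftset (n - r) I) x + cnt I r = cnt I (r + x).
Proof.
move=> hr hx; rewrite cnt_shift_set /cnt -(cardsID [set y : 'I_n | (val y < r)%N] [set y in I | (val y < r + x)%N]).
rewrite addnC; congr (_ + _); apply: eq_card => y; rewrite !inE ?val_shift_r //;
  case: (y \in I) => //=; try (case: ifP => h); lia.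
Qed.

Lemma cnt_shiftB r I x : (r < n)%N -> (n - r <= x <= n)%N ->
  cnt (shiftset (n - r) I) x + cnt I r = #|I| + cnt I (x + r - n).
Proof.
move=> hr hx; rewrite cnt_shift_set /cnt.
rewrite -(cardsID [set y : 'I_n | (val y < r)%N] [set y in I | (val (shift (n - r) y) < x)%N]).
rewrite -(cardsID [set y : 'I_n | (val y < r)%N] I).
have e1 : #|[set y in I | (val (shift (n - r) y) < x)%N] :&: [set y : 'I_n | (val y < r)%N]| =
          #|[set y in I | (val y < x + r - n)%N]|.
  apply: eq_card => y; rewrite !inE val_shift_r //; have := ltn_ord y;
  case: (y \in I) => //=; try (case: ifP => h); lia.
have e2 : #|[set y in I | (val (shift (n - r) y) < x)%N] :\: [set y : 'I_n | (val y < r)%N]| =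
          #|I :\: [set y : 'I_n | (val y < r)%N]|.
  apply: eq_card => y; rewrite !inE val_shift_r //; have := ltn_ord y;
  case: (y \in I) => //=; try (case: ifP => h); lia.
have e3 : #|I :&: [set y : 'I_n | (val y < r)%N]| = #|[set y in I | (val y < r)%N]|.
  by apply: eq_card => y; rewrite !inE.
rewrite e1 e2 e3 -addnA addnC; congr (_ + _); exact: addnC.
Qed.

End Shift.

Lemma rot_cases (a b c d m n fa fb fc fd : nat) :
  (a < b)%N -> (b < c)%N -> (c < d)%N -> (d < n)%N -> (m < n)%N ->
  fa = (if (a + m < n)%N then a + m else a + m - n) ->
  fb = (if (b + m < n)%N then b + m else b + m - n) ->
  fc = (if (c + m < n)%N then c + m else c + m - n) ->
  fd = (if (d + m < n)%N then d + m else d + m - n) ->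
  [\/ [/\ (fa < fb)%N, (fb < fc)%N & (fc < fd)%N],
       [/\ (fd < fa)%N, (fa < fb)%N & (fb < fc)%N],
       [/\ (fc < fd)%N, (fd < fa)%N & (fa < fb)%N] |
       [/\ (fb < fc)%N, (fc < fd)%N & (fd < fa)%N]].
Proof.
move=> h1 h2 h3 h4 hm -> -> -> ->.
case: ifP => e1; case: ifP => e2; case: ifP => e3; case: ifP => e4;
  first [ by apply: Or41; split; lia | by apply: Or42; split; lia
        | by apply: Or43; split; lia | by apply: Or44; split; lia | exfalso; lia ].
Qed.

Lemma ileave_shift n j (S T : {set 'I_n}) : ileave S T ->
  ileave (shiftset j S) (shiftset j T) \/ ileave (shiftset j T) (shiftset j S).
Proof.
move=> [a [b [c [d [ha hb hc hd [h1 h2 h3]]]]]].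
have hm : (j %% n < n)%N := ltn_pmod j (ord_pos a).
have ha' : shift j a \in shiftset j S by rewrite mem_shift.
have hb' : shift j b \in shiftset j T by rewrite mem_shift.
have hc' : shift j c \in shiftset j S by rewrite mem_shift.
have hd' : shift j d \in shiftset j T by rewrite mem_shift.
case: (rot_cases h1 h2 h3 (ltn_ord d) hm (val_shift_th j a) (val_shift_th j b)
        (val_shift_th j c) (val_shift_th j d)) => [[k1 k2 k3]|[k1 k2 k3]|[k1 k2 k3]|[k1 k2 k3]].
- by left; exists (shift j a), (shift j b), (shift j c), (shift j d).
- by right; exists (shift j d), (shift j a), (shift j b), (shift j c).
- by left; exists (shift j c), (shift j d), (shift j a), (shift j b).
- by right; exists (shift j b), (shift j c), (shift j d), (shift j a).
Qed.

Lemma valley_cross k n (I J : {set 'I_n}) (s t : 'I_n) :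
  #|I| = k -> #|J| = k -> s \in J -> s \notin I -> t \in I -> t \notin J ->
  (val s < val t)%N ->
  (forall z : 'I_n, (val s < val z < val t)%N -> (z \in I) = (z \in J)) ->
  cnt I (val s) = (cnt J (val s)).+1 ->
  ~ noncrossing k I J.
Proof.
move=> hI hJ hsJ hsI htI htJ hst hmid hcs hnc.
have cIs1 := cntS_out hsI; have cJs1 := cntS_in hsJ.
have cIt1 := cntS_in htI.
have hbet : cnt I (val s).+1 + cnt J (val t) = cnt I (val t) + cnt J (val s).+1.
  apply: cnt_eq_between => // z hz; apply: hmid; lia.
have cIt_lt := cnt_in_lt htI.
have hIs_le := cnt_le_card I (val s).
have [u hu cu] := rank_exists (I := I) (a := cnt J (val s)) ltac:(lia).
have hus : (val u < val s)%N by apply: (cnt_lt_inj hu); lia.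
have [w hw cw] := rank_exists (I := J) (a := cnt J (val t)) ltac:(lia).
have htw : (val t < val w)%N.
  case: (ltnP (val t) (val w)) => // hwt.
  case: (ltngtP (val w) (val t)) => e.
  - have := cnt_mono J (e : ((val w).+1 <= val t)%N); have := cntS_in hw; lia.
  - lia.
  - have e' : w = t by apply: val_inj.
    by move: htJ; rewrite -e' hw.
have ea : vnth (vec J) (cnt J (val s)).+1 = (val s).+1 := vnth_rank hsJ.
have eu : vnth (vec I) (cnt J (val s)).+1 = (val u).+1 by rewrite -cu vnth_rank.
have eb : vnth (vec I) (cnt I (val t)).+1 = (val t).+1 := vnth_rank htI.
have ew : vnth (vec J) (cnt I (val t)).+1 = (val w).+1.
  have -> : cnt I (val t) = cnt J (val w) by lia.
  exact: vnth_rank.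
have hmono := cnt_mono I (ltnW hst).
have := hnc (cnt J (val s)).+1 (cnt I (val t)).+1 isT ltac:(lia) ltac:(lia).
rewrite ea eu eb ew /cross.
have -> : ((val u).+1 < (val s).+1 < (val t).+1)%N && ((val t).+1 < (val w).+1)%N.
  rewrite !ltnS hus hst htw //.
move=> /(_ _)/negP; apply => // l h1 h2.
have [p hp cp] := rank_exists (I := I) (a := l.-1) ltac:(lia).
have hsp : (val s < val p)%N.
  case: (ltnP (val s) (val p)) => // hps.
  case: (ltngtP (val p) (val s)) => e.
  - have := cnt_mono I (e : ((val p).+1 <= val s)%N); have := cntS_in hp; lia.
  - lia.
  - have e' : p = s by apply: val_inj.
    by move: hsI; rewrite -e' hp.
have hpt : (val p < val t)%N by apply: (cnt_lt_inj hp); lia.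
have hpJ : p \in J by rewrite -hmid ?hsp.
have hbet2 : cnt I (val s).+1 + cnt J (val p) = cnt I (val p) + cnt J (val s).+1.
  apply: cnt_eq_between => // z hz; apply: hmid; lia.
have -> : l = (cnt I (val p)).+1 by lia.
rewrite vnth_rank //.
have -> : cnt I (val p) = cnt J (val p) by lia.
by rewrite vnth_rank.
Qed.

Ltac vlia := simpl in *; lia.

Lemma valn n (x : 'I_n) : (val x < n)%N.
Proof. exact: ltn_ord. Qed.

Definition allNC k n (I J : {set 'I_n}) : Prop :=
  forall i : nat, (1 <= i <= n)%N -> noncrossing k (shiftset i I) (shiftset i J).

Lemma allNC_shift k n (I J : {set 'I_n}) j : (0 < n)%N -> allNC k I J ->
  allNC k (shiftset j I) (shiftset j J).
Proof.
move=> hn h i hi; rewrite !shiftset_comp.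
set m := (j + i) %% n.
have hm : (m < n)%N by apply: ltn_pmod.
pose i' := if m == 0 then n else m.
have e : (j + i) %% n = i' %% n.
  rewrite /i' -/m; case: eqP => [->|_]; first by rewrite modnn.
  by rewrite modn_mod.
rewrite !(shiftset_eq _ e); apply: h; rewrite /i'; case: eqP => [_|]; first by rewrite hn leqnn.
move=> hm0; apply/andP; split; [lia | exact: ltnW].
Qed.

Lemma allNC_self k n (I J : {set 'I_n}) : (0 < n)%N -> allNC k I J -> noncrossing k I J.
Proof.
move=> hn h; have := h n ltac:(by rewrite hn leqnn).
by rewrite !shiftset_id ?modnn.
Qed.

Lemma core k n (I J : {set 'I_n}) (p q : 'I_n) :
  #|I| = k -> #|J| = k -> allNC k I J ->
  (forall x, (x <= n)%N -> (cnt J x <= cnt I x)%N) ->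
  p \in J :\: I -> q \in I :\: J -> (val p < val q)%N -> False.
Proof.
move=> hI hJ hall hg hp hq hpq.
have hn : (0 < n)%N := ord_pos p.
(* t : first element of I :\: J after p *)
have ext : exists m : nat, [exists z in I :\: J, (val z == m) && (val p < m)%N].
  by exists (val q); apply/existsP; exists q; rewrite hq eqxx hpq.
case: (ex_minnP ext) => mt /existsP [t /andP [ht /andP [/eqP etm hpt]]] tmin.
subst mt.
have exs : exists m : nat, [exists z in J :\: I, (val z == m) && (m < val t)%N].
  by exists (val p); apply/existsP; exists p; rewrite hp eqxx hpt.
have bnd : forall m : nat, [exists z in J :\: I, (val z == m) && (m < val t)%N] -> (m <= val t)%N.
  by move=> m /existsP [z /andP [_ /andP [_ h]]]; exact: ltnW.
case: (ex_maxnP exs bnd) => ms /existsP [s /andP [hs /andP [/eqP esm hst]]] smax.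
subst ms.
have hps : (val p <= val s)%N.
  by apply: smax; apply/existsP; exists p; rewrite hp eqxx hpt.
move: hs ht; rewrite !inE => /andP [hsI hsJ] /andP [htJ htI].
have hmid : forall z : 'I_n, (val s < val z < val t)%N -> (z \in I) = (z \in J).
  move=> z /andP [h1 h2].
  case hzI: (z \in I); case hzJ: (z \in J) => //.
  - have : (val t <= val z)%N.
      apply: tmin; apply/existsP; exists z; rewrite !inE hzI hzJ eqxx andTb; lia.
    lia.
  - have : (val z <= val s)%N.
      apply: smax; apply/existsP; exists z; rewrite !inE hzI hzJ eqxx andTb; lia.
    lia.
have cIs1 := cntS_out hsI; have cJs1 := cntS_in hsJ.
have hg1 := hg (val s).+1 (valn s).
have exr : exists m : nat, (m <= val s)%N && (cnt I m + cnt J (val s) < cnt J m + cnt I (val s))%N.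
  exists 0; rewrite !cnt0; apply/andP; split => //; move: hg1; rewrite cIs1 cJs1 !add0n; by [].
have bndr : forall m : nat, (m <= val s)%N && (cnt I m + cnt J (val s) < cnt J m + cnt I (val s))%N ->
    (m <= val s)%N by move=> m /andP [].
case: (ex_maxnP exr bndr) => r /andP [hrs hr] rmax.
have hrs' : (r < val s)%N.
  rewrite ltn_neqAle hrs andbT; apply/eqP => e; rewrite e in hr; lia.
have hr1 : ~~ ((r.+1 <= val s)%N && (cnt I r.+1 + cnt J (val s) < cnt J r.+1 + cnt I (val s))%N).
  by apply/negP => /rmax; lia.
have sI := cnt_step I r; have sJ := cnt_step J r.
have hreq : cnt I r + cnt J (val s) + 1 = cnt J r + cnt I (val s).
  move: hr1; rewrite hrs' andTb; lia.
have hrn : (r < n)%N by have := valn s; vlia.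
pose I2 := shiftset (n - r) I; pose J2 := shiftset (n - r) J.
have vs := val_shift_r s hrn; rewrite (ltnW hrs') in vs.
have vt := val_shift_r t hrn; rewrite ifT in vt; last by vlia.
apply: (valley_cross (k := k) (I := I2) (J := J2) (s := shift (n - r) s) (t := shift (n - r) t)).
- by rewrite card_shift.
- by rewrite card_shift.
- by rewrite mem_shift.
- by rewrite mem_shift hsI.
- by rewrite mem_shift.
- by rewrite mem_shift htJ.
- rewrite vs vt; vlia.
- move=> z2; rewrite vs vt => hz.
  have hz2 : (val z2 + r < n)%N by have := valn t; vlia.
  have e : z2 = shift (n - r) (Ordinal hz2).
    apply: val_inj; rewrite val_shift_r //= ifT; vlia.
  rewrite e !mem_shift; apply: hmid => /=; vlia.
- have hA := cnt_shiftA I (x := val s - r) hrn ltac:(have := valn s; vlia).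
  have hB := cnt_shiftA J (x := val s - r) hrn ltac:(have := valn s; vlia).
  rewrite vs; have e : r + (val s - r) = val s by lia.
  rewrite e in hA hB; rewrite /I2 /J2; vlia.
- exact: (allNC_self hn (allNC_shift (j := n - r) hn hall)).
Qed.

Lemma shiftsetD n j (I J : {set 'I_n}) :
  shiftset j (I :\: J) = shiftset j I :\: shiftset j J.
Proof.
apply/setP => z; rewrite inE; apply/imsetP/andP => [[y hy ->]|[hz1 hz2]].
- by move: hy; rewrite inE !mem_shift => /andP [a b]; split.
- case/imsetP: hz2 => y hy e; exists y => //; rewrite inE hy andbT.
  by move: hz1; rewrite e mem_shift.
Qed.

Lemma part2 k n (I J : {set 'I_n}) : inV k I -> inV k J -> allNC k I J ->
  weakly_separated I J.
Proof.
move=> /eqP hI /eqP hJ hall u v [h1 h2].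
have [x0 _] := hull_nonempty h1.
have hn : (0 < n)%N := ord_pos x0.
have hd : forall x, x \in I :\: J -> x \notin J :\: I.
  by move=> x; rewrite !inE => /andP [a b]; rewrite b.
have hil := hull_ileave hd h1 h2.
have exm : exists m : nat, [exists x : 'I_n, cnt I (val x) + (k - cnt J (val x)) == m].
  by exists (cnt I (val x0) + (k - cnt J (val x0))); apply/existsP; exists x0.
case: (ex_minnP exm) => m /existsP [r0 /eqP hr0] mmin.
have cJk : forall y, (cnt J y <= k)%N by move=> y; rewrite -hJ; exact: cnt_le_card.
have cIk : forall y, (cnt I y <= k)%N by move=> y; rewrite -hI; exact: cnt_le_card.
have minlt : forall y, (y < n)%N -> (cnt I (val r0) + cnt J y <= cnt I y + cnt J (val r0))%N.
  move=> y hy; have := mmin (cnt I (val (Ordinal hy)) + (k - cnt J (val (Ordinal hy)))).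
  move=> /(_ _) h; have := h ltac:(apply/existsP; exists (Ordinal hy); by []).
  have := cJk y; have := cJk (val r0); simpl in *; lia.
have minprop : forall y, (y <= n)%N -> (cnt I (val r0) + cnt J y <= cnt I y + cnt J (val r0))%N.
  move=> y; rewrite leq_eqVlt => /orP [/eqP ->|hy]; last exact: minlt.
  have := minlt 0 hn; rewrite !cnt0 !(@cnt_big _ _ n) // hI hJ; lia.
set r := val r0 in minprop *.
have hr : (r < n)%N := ltn_ord r0.
pose I1 := shiftset (n - r) I; pose J1 := shiftset (n - r) J.
have hg : forall x, (x <= n)%N -> (cnt J1 x <= cnt I1 x)%N.
  move=> x hx; case: (leqP x (n - r)) => h.
  - have hA := cnt_shiftA I hr h; have hB := cnt_shiftA J hr h.
    have := minprop (r + x) ltac:(lia); rewrite /I1 /J1; lia.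
  - have hA := cnt_shiftB I (x := x) hr ltac:(lia).
    have hB := cnt_shiftB J (x := x) hr ltac:(lia).
    have := minprop (x + r - n) ltac:(lia); rewrite /I1 /J1 hI hJ in hA hB *; lia.
have hall1 : allNC k I1 J1 := allNC_shift (j := n - r) hn hall.
have hI1 : #|I1| = k by rewrite /I1 card_shift.
have hJ1 : #|J1| = k by rewrite /J1 card_shift.
have [p [q [hp [hq hpq]]]] : exists p q : 'I_n, [/\ p \in J1 :\: I1, q \in I1 :\: J1 & (val p < val q)%N].
  case: hil => hil; case: (ileave_shift (n - r) hil);
    rewrite !shiftsetD -/I1 -/J1 => [[a [b [c [d [ha hb hc hd' [o1 o2 o3]]]]]]];
    first [ by exists b, c | by exists a, b ].
exact: (core hI1 hJ1 hall1 hg hp hq hpq).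
Qed.

Lemma mod_inv n j : (0 < n)%N -> (j + (n - j %% n)) %% n = 0.
Proof.
move=> hn; rewrite -modnDml subnKC ?modnn //; apply: ltnW; exact: ltn_pmod.
Qed.

Lemma ws_shift n j (I J : {set 'I_n}) : weakly_separated I J ->
  weakly_separated (shiftset j I) (shiftset j J).
Proof.
move=> hw u v [h1 h2].
have [x0 _] := hull_nonempty h1.
have hn : (0 < n)%N := ord_pos x0.
have hd : forall x, x \in shiftset j I :\: shiftset j J -> x \notin shiftset j J :\: shiftset j I.
  by move=> x; rewrite !inE => /andP [a b]; rewrite b.
have [n1 n2] := ws_no_ileave hw.
have back : forall S T : {set 'I_n}, ileave (shiftset j S) (shiftset j T) ->
    ileave S T \/ ileave T S.
  move=> S T h; have := ileave_shift (n - j %% n) h.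
  by rewrite !shiftset_comp !shiftset_id ?mod_inv.
case: (hull_ileave hd h1 h2); rewrite -!shiftsetD => /back [] //.
Qed.

Lemma part3 k n (F : {set {set 'I_n}}) : (0 < n)%N ->
  Sep_face k F <-> (forall i : nat, (1 <= i <= n)%N -> shifted_NC_face k i F).
Proof.
move=> hn; split.
- move=> [hF1 hF2] i /andP [hi1 hin].
  exists [set shiftset (n - i) I | I in F]; split; first split.
  + move=> I' /imsetP [I hI ->]; by rewrite /inV card_shift; exact: hF1.
  + move=> I' J' /imsetP [I hI ->] /imsetP [J hJ ->].
    apply: part1; rewrite /inV ?card_shift; [exact: hF1 | exact: hF1 |].
    exact: ws_shift (hF2 _ _ hI hJ).
  + rewrite -imset_comp; rewrite (eq_imset (g := id)) ?imset_id // => I /=.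
    rewrite shiftset_comp shiftset_id // subnK // modnn //.
- move=> h.
  have [G [[hG1 hG2] eF]] := h n ltac:(by rewrite hn leqnn).
  have eFG : F = G.
    by rewrite eF (eq_imset (g := id)) ?imset_id // => I /=; rewrite shiftset_id ?modnn.
  split; first by move=> I; rewrite eFG; exact: hG1.
  move=> I J hI hJ; apply: part2; [apply: hG1; by rewrite -eFG | apply: hG1; by rewrite -eFG |].
  move=> i /andP [hi1 hin].
  pose i2 := if i == n then n else n - i.
  have hi2 : (1 <= i2 <= n)%N.
    rewrite /i2; case: eqP => e; first by rewrite hn leqnn.
    apply/andP; split; [lia | exact: leq_subr].
  have hm : (i2 + i) %% n = 0.
    rewrite /i2; case: eqP => e; first by rewrite e modnDl modnn.
    by rewrite subnK // modnn.
  have [G2 [[_ hG2'] eF2]] := h i2 hi2.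
  move: hI hJ; rewrite eF2 => /imsetP [I0 hI0 ->] /imsetP [J0 hJ0 ->].
  rewrite !shiftset_comp !shiftset_id //; exact: hG2'.
Qed.

Theorem proposition5p2 (k n : nat) (hk1 : (1 <= k)%N) (hkn : (k <= n - 1)%N) :
  (forall I J : {set 'I_n}, inV k I -> inV k J ->
     weakly_separated I J -> noncrossing k I J) /\
  (forall I J : {set 'I_n}, inV k I -> inV k J ->
     (forall i : nat, (1 <= i <= n)%N -> noncrossing k (shiftset i I) (shiftset i J)) ->
     weakly_separated I J) /\
  (forall F : {set {set 'I_n}},
     Sep_face k F <-> (forall i : nat, (1 <= i <= n)%N -> shifted_NC_face k i F)).
Proof.
have hn : (0 < n)%N by lia.
split; first by move=> I J; exact: part1.
split; first by move=> I J; exact: part2.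
by move=> F; exact: part3.
Qed.
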